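(* A countably based topological space is scattered if and only if it is a countable quasi-Polish space satisfying the $T_D$-axiom.
   Context: A point $x$ is isolated if $\{x\}$ is open, otherwise a limit point. Derived sets: $X^{(0)}=X$, $X^{(\alpha+1)}$ is the set of points of $X^{(\alpha)}$ that are limit points of the subspace $X^{(\alpha)}$, and $X^{(\alpha)}=\bigcap_{\beta<\alpha}X^{(\beta)}$ for limit $\alpha$; $|X|_{CB}$ is the least $\alpha$ with $X^{(\alpha)}=X^{(\alpha+1)}$. $X$ is scattered if $X^{(|X|_{CB})}=\emptyset$ (equivalently every non-empty subspace has an isolated point). A set is locally closed if it is the intersection of an open and a closed set; $X$ satisfies $T_D$ if every singleton $\{x\}$ is locally closed. A quasi-metric on a set $X$ is a function $d\colon X\times X\to[0,\infty)$ with $x=y$ iff $d(x,y)=d(y,x)=0$ and $d(x,z)\le d(x,y)+d(y,z)$; it induces the topology generated by $B_d(x,\varepsilon)=\{y\mid d(x,y)<\varepsilon\}$; $\widehat d(x,y)=\max\{d(x,y),d(y,x)\}$. $(x_n)$ is Cauchy if for every $\varepsilon>0$ there is $n_0$ with $d(x_n,x_m)<\varepsilon$ for all $m\ge n\ge n_0$; $d$ is complete if every Cauchy sequence converges in the topology of $\widehat d$. A space is quasi-Polish if it is countably based and its topology is induced by a complete quasi-metric. *)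

(* Defs.v *)
From HB Require Import structures.
From mathcomp Require Import all_boot all_order all_algebra.
From mathcomp Require Import all_classical all_reals topology.
From mathcomp Require Import Rstruct Rstruct_topology.
From Stdlib Require Import Rdefinitions.
Set Implicit Arguments. Unset Strict Implicit. Unset Printing Implicit Defensive.
Import Order.TTheory GRing.Theory Num.Theory.
Local Open Scope classical_set_scope.
Local Open Scope ring_scope.

Section Defs.
Variable T : topologicalType.

Definition derived (A : set T) : set T :=
  [set x | A x /\ forall U : set T, open U -> U x -> exists y, U y /\ A y /\ y <> x].

(* The Cantor-Bendixson stages X^(alpha), alpha ordinal: generated from X by
   the successor step (derived set) and by intersections of families of stages
   (limit step; the empty family gives X = X^(0)). *)
Inductive CB_stage : set T -> Prop :=
  | CB_succ A : CB_stage A -> CB_stage (derived A)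
  | CB_inter (F : set (set T)) : (forall B, F B -> CB_stage B) -> CB_stage (\bigcap_(B in F) B).

(* X^(|X|_CB): the (smallest) stage at which the sequence stabilises *)
Definition CB_kernel : set T := \bigcap_(B in CB_stage) B.

Definition scattered : Prop := CB_kernel = set0.

Definition locally_closed (A : set T) : Prop :=
  exists U C : set T, open U /\ closed C /\ A = U `&` C.

Definition T_D : Prop := forall x : T, locally_closed [set x].

Definition quasi_metric (d : T -> T -> R) : Prop :=
  (forall x y, 0 <= d x y) /\
  (forall x y, x = y <-> (d x y = 0 /\ d y x = 0)) /\
  (forall x y z, d x z <= d x y + d y z).

Definition qball (d : T -> T -> R) (x : T) (e : R) : set T := [set y | d x y < e].

Definition induces_topology (d : T -> T -> R) : Prop :=
  forall U : set T, open U <-> (forall x, U x -> exists2 e : R, 0 < e & qball d x e `<=` U).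

Definition dhat (d : T -> T -> R) (x y : T) : R := Num.max (d x y) (d y x).

Definition qm_cauchy (d : T -> T -> R) (u : nat -> T) : Prop :=
  forall e : R, 0 < e -> exists n0 : nat, forall n m : nat,
    leq n0 n -> leq n m -> d (u n) (u m) < e.

Definition dhat_converges (d : T -> T -> R) (u : nat -> T) : Prop :=
  exists x : T, forall e : R, 0 < e -> exists N : nat, forall n : nat,
    leq N n -> dhat d x (u n) < e.

Definition qm_complete (d : T -> T -> R) : Prop :=
  forall u : nat -> T, qm_cauchy d u -> dhat_converges d u.

Definition quasi_Polish : Prop :=
  @second_countable T /\
  exists d : T -> T -> R, quasi_metric d /\ induces_topology d /\ qm_complete d.

End Defs.

(* Main.v *)
Require Import Defs.
From mathcomp Require Import all_boot all_order all_algebra all_classical all_reals topology Rstruct.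
From Stdlib Require Import Relations.
Import Order.TTheory GRing.Theory Num.Theory.
Set Implicit Arguments. Unset Strict Implicit. Unset Printing Implicit Defensive.
Local Open Scope classical_set_scope.

Section Stages.
Variable T : topologicalType.
Implicit Types A B c x : set T.

Lemma derived_sub A : derived A `<=` A.
Proof. by move=> x []. Qed.

Lemma derived_mono {A B} : A `<=` B -> derived A `<=` derived B.
Proof.
move=> AB x [Ax H]; split; first exact: AB.
move=> U oU Ux; have [y [Uy [Ay yx]]] := H U oU Ux.
by exists y; split => //; split => //; apply: AB.
Qed.

Definition ext c := forall x, CB_stage x -> c `<=` x -> c <> x -> c `<=` derived x.

Lemma ext_M {c} : ext c -> forall {x}, CB_stage x -> c `<=` x \/ x `<=` derived c.
Proof.
move=> ec x; elim => [y sy IH | F sF IH].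
- case: IH => [cy|yd].
  + case: (pselect (c = y)) => [<-|neq]; first by right.
    by left; exact: ec.
  + by right=> z /derived_sub /yd.
- case: (pselect (forall B, F B -> c `<=` B)) => [h|].
  + by left => z cz B FB; exact: h B FB z cz.
  + move=> /existsNP [B /not_implyP [FB ncB]].
    case: (IH B FB) => // Bd; right => z zF; exact: Bd _ (zF B FB).
Qed.

Lemma all_ext {c} : CB_stage c -> ext c.
Proof.
elim => [y sy ey | F sF eF].
- move=> x sx dyx neq; case: (ext_M ey sx) => [yx|xd].
  + case: (pselect (y = x)) => [<-|ne]; first by [].
    have ydx := ey x sx yx ne.
    by move=> z /derived_sub /ydx.
  + by exfalso; apply: neq; apply/seteqP; split.
- move=> x sx cx neq.
  have [B [FB nxB]] : exists B, F B /\ ~ (x `<=` B).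
    apply: contrapT => h; apply: neq; apply/seteqP; split => // z xz B FB.
    by apply: contrapT => nBz; apply: h; exists B; split => // xB; apply: nBz; apply: xB.
  case: (ext_M (eF B FB) sx) => [Bx|xd].
  + have BneX : B <> x by move=> BX; apply: nxB; rewrite BX.
    have Bd := eF B FB x sx Bx BneX.
    by move=> z cz; apply: Bd; exact: cz B FB.
  + by exfalso; apply: nxB => z /xd /derived_sub.
Qed.

Lemma key {A B} : CB_stage A -> CB_stage B -> B `<=` A \/ A `<=` derived B.
Proof. by move=> sA sB; exact: (@ext_M B (all_ext sB) A sA). Qed.

Lemma perfect_sub {P : set T} : P `<=` derived P -> forall A, CB_stage A -> P `<=` A.
Proof.
move=> PD A; elim => [y sy IH | F sF IH].
- by move=> z /PD; apply: derived_mono.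
- by move=> z Pz B FB; exact: IH B FB z Pz.
Qed.

Lemma perfect_empty {P : set T} : scattered T -> P `<=` derived P -> P = set0.
Proof.
move=> sc PD; apply/seteqP; split => // z Pz.
have : @CB_kernel T z by move=> B sB; exact: perfect_sub PD B sB z Pz.
by rewrite /scattered in sc; rewrite sc.
Qed.

Lemma kernel_stage : CB_stage (@CB_kernel T).
Proof. by apply: CB_inter. Qed.

Lemma kernel_perfect : @CB_kernel T `<=` derived (@CB_kernel T).
Proof. by move=> z Kz; apply: Kz; apply: CB_succ; exact: kernel_stage. Qed.

End Stages.
Unset Implicit Arguments.
Section Forward.
Variable T : topologicalType.
Hypothesis sc : scattered T.

Definition Mset (x : T) : set T := \bigcap_(B in [set B | CB_stage B /\ B x]) B.

Lemma M_stage x : CB_stage (Mset x).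
Proof. by apply: CB_inter => B []. Qed.

Lemma M_in x : Mset x x.
Proof. by move=> B []. Qed.

Lemma M_isol x : ~ derived (Mset x) x.
Proof.
move=> dx; have : Mset x `<=` derived (Mset x).
  by move=> z Mz; apply: Mz; split => //; apply: CB_succ; exact: M_stage.
move=> /(perfect_empty sc) M0; have := M_in x; by rewrite M0.
Qed.

Lemma W_ex x : exists W : set T, open W /\ W x /\ forall y, W y -> Mset x y -> y = x.
Proof.
apply: contrapT => H; apply: (M_isol x); split; first exact: M_in.
move=> U oU Ux; apply: contrapT => H2; apply: H; exists U; split => //; split => //.
move=> y Uy My; apply: contrapT => ne; apply: H2; by exists y.
Qed.

Definition Wf : T -> set T := projT1 (choice W_ex).
Lemma Wf_spec x : open (Wf x) /\ Wf x x /\ forall y, Wf x y -> Mset x y -> y = x.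
Proof. exact: (projT2 (choice W_ex) x). Qed.

Definition Rr (x y : T) : Prop := Wf x y /\ y <> x.
Definition le : T -> T -> Prop := clos_refl_trans T Rr.

Lemma R_step x y : Rr x y -> Mset x `<=` derived (Mset y).
Proof.
move=> [Wy yx]; case: (key (M_stage x) (M_stage y)) => // yx'.
by exfalso; apply: yx; have [_ [_ h]] := Wf_spec x; apply: h => //; apply: yx'; exact: M_in.
Qed.

Lemma le_chain x y : le x y -> x = y \/ Mset x `<=` derived (Mset y).
Proof.
elim => [a b /R_step h| a | a b c _ IH1 _ IH2]; [by right | by left |].
case: IH1 => [->//|h1]; case: IH2 => [<-|h2]; first by right.
by right => z /h1 /derived_sub /h2.
Qed.

Lemma le_antisym x y : le x y -> le y x -> x = y.
Proof.
move=> /le_chain [//|h1] /le_chain [//|h2].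
exfalso; apply: (M_isol x); apply: h2; apply: derived_sub; apply: h1; exact: M_in.
Qed.

Lemma le_nbhs x : nbhs x [set y | le x y].
Proof.
rewrite nbhsE; exists (Wf x); first by have [? [? _]] := Wf_spec x; split.
move=> z Wz /=; case: (pselect (z = x)) => [->|ne]; first exact: rt_refl.
by apply: rt_step; split.
Qed.

Lemma asc (u : nat -> T) (N : nat) :
  (forall n m, (N <= n)%N -> (n <= m)%N -> le (u n) (u m)) ->
  exists n, (N <= n)%N /\ forall m, (n <= m)%N -> u m = u n.
Proof.
move=> H; apply: contrapT => H1.
have H2 : forall n, (N <= n)%N -> exists m, (n <= m)%N /\ u m <> u n.
  move=> n Nn; apply: contrapT => h; apply: H1; exists n; split => // m nm.
  by apply: contrapT => ne; apply: h; exists m.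
pose Q := \bigcap_(B in [set B | CB_stage B /\ forall n, (N <= n)%N -> Mset (u n) `<=` B]) B.
have MQ : forall n, (N <= n)%N -> Mset (u n) `<=` Q by move=> n Nn z Mz B [_ hB]; exact: hB n Nn z Mz.
have QD : Q `<=` derived Q.
  move=> z Qz; apply: Qz; split; first by apply: CB_succ; apply: CB_inter => B [].
  move=> n Nn; have [m [nm ne]] := H2 n Nn.
  case: (le_chain _ _ (H n m Nn nm)) => [e|h]; first by exfalso; apply: ne; rewrite e.
  move=> w /h; apply: derived_mono; apply: MQ; exact: leq_trans Nn nm.
have := perfect_empty sc QD => Q0.
have : Q (u N) by exact: (MQ N (leqnn N) _ (M_in (u N))).
by rewrite Q0.
Qed.

Lemma TD_of_scattered : T_D T.
Proof.
move=> x; pose C := closure [set x].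
have [U [oU [Ux HU]]] : exists U, open U /\ U x /\ forall z, U z -> C z -> z = x.
  apply: contrapT => H.
  have CD : C `<=` derived C.
    move=> y Cy; split => // V oV Vy.
    case: (pselect (y = x)) => [yx|ne].
    - subst y; apply: contrapT => H2; apply: H; exists V; split => //; split => //.
      move=> z Vz Cz; apply: contrapT => zx; apply: H2; by exists z.
    - have : [set x] `&` V !=set0 by apply: Cy; apply: open_nbhs_nbhs; split.
      move=> [w [-> Vx]]; exists x; split => //; split; first exact: subset_closure.
      by move=> e; apply: ne.
  have := perfect_empty sc CD => C0.
  have : C x by exact: subset_closure.
  by rewrite C0.
exists U, C; split => //; split; first exact: closed_closure.
apply/seteqP; split => z.
- by move=> ->; split => //; exact: subset_closure.
- by move=> [Uz Cz]; exact: HU.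
Qed.

End Forward.
From mathcomp Require Import lra.
Local Notation R := Rdefinitions.R.
Section Metric.
Variable T : topologicalType.
Hypothesis sc : scattered T.
Variable Bs : set (set T).
Variable f : set T -> nat.
Hypothesis finj : {in Bs &, injective f}.
Hypothesis hB : basis Bs.
Local Open Scope ring_scope.
Local Notation lee := (le T sc).

Definition lv (j : nat) : R := (j.+2%:R)^-1.

Lemma lv_gt0 j : 0 < lv j.
Proof. by rewrite /lv invr_gt0 ltr0n. Qed.

Lemma lv_le1 j : lv j <= 1.
Proof. by rewrite /lv invr_le1 ?unitfE ?pnatr_eq0 ?ltr0n // ler1n. Qed.

Lemma lv_anti (i j : nat) : leq i j -> lv j <= lv i.
Proof. by move=> ij; rewrite /lv lef_pV2 ?posrE ?ltr0n // ler_nat !ltnS. Qed.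

Lemma lv_small (e : R) : 0 < e -> exists K, lv K < e.
Proof.
move=> e0; have e0' : 0 < e^-1 by rewrite invr_gt0.
have := archi_boundP (ltW e0').
set K := Num.bound _ => hK; exists K.
rewrite /lv -[e]invrK ltf_pV2 ?posrE ?ltr0n //.
apply: (lt_le_trans hK); rewrite ler_nat; exact: (ltnW (leqnSn K.+1)).
Qed.

Definition lev (x y : T) (j : nat) : Prop := exists U, Bs U /\ f U = j /\ U x /\ ~ U y.

Lemma ex_asb {x y} : (exists j, lev x y j) -> exists j, `[< lev x y j >].
Proof. by move=> [j h]; exists j; apply/asboolP. Qed.

Definition dist0 (x y : T) : R :=
  match pselect (exists j, lev x y j) with
  | left h => lv (ex_minn (ex_asb h))
  | right _ => 0 end.

Lemma dist0_cases x y : (dist0 x y = 0 /\ forall j, ~ lev x y j) \/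
  exists m, [/\ lev x y m, forall j, lev x y j -> leq m j & dist0 x y = lv m].
Proof.
rewrite /dist0; case: pselect => [h|h].
- right; case: ex_minnP => m /asboolP Pm Hm; exists m; split => // j lj.
  by apply: Hm; apply/asboolP.
- by left; split => // j lj; apply: h; exists j.
Qed.

Lemma dist0_ge x y j : lev x y j -> lv j <= dist0 x y.
Proof.
move=> lj; case: (dist0_cases x y) => [[_ h]|[m [_ hm ->]]].
- by exfalso; exact: h j lj.
- by apply: lv_anti; exact: hm.
Qed.

Lemma dist0_ge0 x y : 0 <= dist0 x y.
Proof. by case: (dist0_cases x y) => [[-> _]|[m [_ _ ->]]] //; exact: ltW (lv_gt0 m). Qed.

Lemma dist0_le1 x y : dist0 x y <= 1.
Proof. by case: (dist0_cases x y) => [[-> _]|[m [_ _ ->]]]; [exact: ler01 | exact: lv_le1]. Qed.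

Definition dd (x y : T) : R := if pselect (lee x y) then dist0 x y else 1.

Lemma dd_eq x y : lee x y -> dd x y = dist0 x y.
Proof. by move=> h; rewrite /dd; case: pselect. Qed.

Lemma dd_eq1 x y : ~ lee x y -> dd x y = 1.
Proof. by move=> h; rewrite /dd; case: pselect. Qed.

Lemma dd_ge0 x y : 0 <= dd x y.
Proof. by rewrite /dd; case: pselect => hh; [exact: dist0_ge0 | exact: ler01]. Qed.

Lemma dd_le1 x y : dd x y <= 1.
Proof. by rewrite /dd; case: pselect => hh; [exact: dist0_le1 | exact: lexx]. Qed.

Lemma dd_refl x : dd x x = 0.
Proof.
rewrite dd_eq; last exact: rt_refl.
by case: (dist0_cases x x) => [[-> _]|[m [[U [_ [_ [Ux nUx]]]] _ _]]].
Qed.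

Lemma dd_lt1 x y : dd x y < 1 -> lee x y.
Proof. by move=> h; apply: contrapT => nl; move: h; rewrite dd_eq1 // ltxx. Qed.

Lemma dd_qm : quasi_metric dd.
Proof.
split; first exact: dd_ge0.
split.
  move=> x y; split; first by move=> <-; rewrite dd_refl.
  move=> [h1 h2]; apply: le_antisym; apply: dd_lt1; [rewrite h1 | rewrite h2]; exact: ltr01.
move=> x y z.
case: (pselect (lee x y)) => hxy; last first.
  by rewrite (dd_eq1 _ _ hxy); have := dd_le1 x z; have := dd_ge0 y z; lra.
case: (pselect (lee y z)) => hyz; last first.
  by rewrite (dd_eq1 _ _ hyz); have := dd_le1 x z; have := dd_ge0 x y; lra.
have hxz : lee x z by apply: rt_trans hxy hyz.
rewrite !dd_eq //.
have := dist0_ge0 x y; have := dist0_ge0 y z.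
case: (dist0_cases x z) => [[-> _]|[m [[U [BU [fU [Ux nUz]]]] _ ->]]]; first lra.
case: (pselect (U y)) => Uy.
- have : lv m <= dist0 y z by apply: dist0_ge; exists U.
  lra.
- have : lv m <= dist0 x y by apply: dist0_ge; exists U.
  lra.
Qed.


Lemma nlev x j : nbhs x [set z | ~ lev x z j].
Proof.
case: (pselect (exists V, Bs V /\ f V = j /\ V x)) => [[V [BV [fV Vx]]]|nex].
- have oV : open V by have [h _] := hB; exact: h.
  apply: filterS (open_nbhs_nbhs (conj oV Vx)) => z Vz [U [BU [fU [Ux nUz]]]].
  have UV : U = V by apply: finj; rewrite ?inE //; rewrite fU fV.
  by apply: nUz; rewrite UV.
- apply: filterS (@filterT _ (nbhs x) _) => z _ [U [BU [fU [Ux _]]]].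
  by apply: nex; exists U.
Qed.

Lemma nK x K : nbhs x [set z | forall j, leq j K -> ~ lev x z j].
Proof.
elim: K => [|K IH].
- apply: filterS (nlev x 0) => z h j; rewrite leqn0 => /eqP ->; exact: h.
- apply: filterS (filterI IH (nlev x K.+1)) => z [h1 h2] j.
  rewrite leq_eqVlt ltnS => /orP [/eqP ->|jK]; [exact: h2 | exact: h1].
Qed.

Lemma dd_ind : induces_topology dd.
Proof.
move=> U; split.
- move=> oU x Ux; have nU : nbhs x U by apply: open_nbhs_nbhs.
  have [_ hb] := hB.
  have [V [BV Vx] VU] := hb x U nU.
  exists (lv (f V)); first exact: lv_gt0.
  move=> y; rewrite /qball /= => dxy; apply: VU; apply: contrapT => nVy.
  case: (pselect (lee x y)) => h; last first.
    by move: dxy; rewrite dd_eq1 //; have := lv_le1 (f V); lra.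
  move: dxy; rewrite dd_eq //.
  have : lv (f V) <= dist0 x y by apply: dist0_ge; exists V.
  lra.
- move=> H; rewrite openE => x Ux.
  have [e e0 sub] := H x Ux.
  apply: (filterS sub).
  have [K hK] := lv_small e e0.
  apply: filterS (filterI (le_nbhs T sc x) (nK x K)) => z [lxz hz]; rewrite /qball /=.
  rewrite dd_eq //.
  case: (dist0_cases x z) => [[-> _]|[m [lm _ ->]]]; first exact: e0.
  have Km : leq K m.
    by apply: contrapT => /negP; rewrite -ltnNge => mK; exact: hz m (ltnW mK) lm.
  exact: (le_lt_trans (lv_anti _ _ Km) hK).
Qed.

Lemma dd_complete : qm_complete dd.
Proof.
move=> u hC.
have [N hN] := hC 1 ltr01.
have hle : forall n m, leq N n -> leq n m -> lee (u n) (u m).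
  by move=> n m Nn nm; apply: dd_lt1; exact: hN.
have [n [Nn hn]] := asc T sc u N hle.
exists (u n) => e e0; exists n => m nm.
by rewrite (hn m nm) /dhat dd_refl maxxx.
Qed.

End Metric.

Lemma forward (T : topologicalType) : @second_countable T -> scattered T ->
  countable [set: T] /\ quasi_Polish T /\ T_D T.
Proof.
move=> hsc sc; have hsc' := hsc; case: hsc => Bs cB hB.
have /countable_injP [f finj] := cB.
split; last split.
- have hg : forall x, exists U, Bs U /\ U x /\ U `<=` Wf T sc x.
    move=> x; have [_ hb] := hB; have [o [wx _]] := Wf_spec T sc x.
    have [V [BV Vx] VW] := hb x (Wf T sc x) (open_nbhs_nbhs (conj o wx)).
    by exists V.
  have [g hg'] := choice hg.
  apply/countable_injP; exists (fun x => f (g x)) => x y _ _ e.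
  have [Bx [gx WX]] := hg' x; have [By [gy WY]] := hg' y.
  have gxy : g x = g y by apply: finj => //; rewrite inE.
  case: (pselect (x = y)) => // ne.
  apply: (le_antisym T sc).
  + apply: rt_step; split; last by move=> h; apply: ne.
    by apply: WX; rewrite gxy.
  + apply: rt_step; split; last by [].
    by apply: WY; rewrite -gxy.
- split => //; exists (dd T sc Bs f); split; first exact: dd_qm.
  split; [exact: (dd_ind _ _ _ _ finj hB) | exact: dd_complete].
- exact: TD_of_scattered.
Qed.

Section Backward.
Variable T : topologicalType.
Local Open Scope ring_scope.
Variable d : T -> T -> R.
Hypothesis qm : quasi_metric d.
Hypothesis ind : induces_topology d.
Hypothesis cpl : qm_complete d.
Hypothesis td : T_D T.
Variable g : T -> nat.
Hypothesis ginj : forall a b, g a = g b -> a = b.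
Variable P : set T.
Hypothesis Pcl : closed P.
Hypothesis PD : P `<=` derived P.

Lemma d_refl x : d x x = 0.
Proof. by have [_ [h _]] := qm; have [h1 _] := h x x; have [] := h1 erefl. Qed.

Lemma d_tri x y z : d x z <= d x y + d y z.
Proof. by have [_ [_ h]] := qm; exact: h. Qed.

Lemma qball_open x e : open (qball d x e).
Proof.
apply/ind => y; rewrite /qball /= => hy.
exists (e - d x y); first by rewrite subr_gt0.
move=> z; rewrite /qball /= => hz; have := d_tri x y z; lra.
Qed.

Lemma ball_sub U x : open U -> U x -> exists2 e, 0 < e & qball d x e `<=` U.
Proof. by move=> oU Ux; have [h _] := ind U; exact: h oU x Ux. Qed.

Lemma dhat_ge1 x y : d x y <= dhat d x y.
Proof. by rewrite /dhat le_max lexx. Qed.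

Lemma dhat_ge2 x y : d y x <= dhat d x y.
Proof. by rewrite /dhat le_max lexx orbT. Qed.

Definition spec (n : nat) (y : T) (e : R) (z : T) (e' : R) : Prop :=
  [/\ P z, 0 < e', e' <= e, e' <= lv n &
   (qball d z (2 * e') `<=` qball d y e /\
    forall a, g a = n -> P a -> ~ qball d z (2 * e') a)].

Lemma step n y e : P y -> 0 < e -> exists z e', spec n y e z e'.
Proof.
move=> Py e0.
pose W := qball d y e.
have Wy : W y by rewrite /W /qball /= d_refl.
have [V [oV [VW [[z [Vz Pz]] Hex]]]] : exists V, open V /\ V `<=` W /\
    (exists z, V z /\ P z) /\ forall a, g a = n -> P a -> ~ V a.
  case: (pselect (exists a0, g a0 = n /\ P a0 /\ W a0)) => [[a0 [ga [Pa Wa]]]|nex].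
  - have [U [C [oU [cC e1]]]] := td a0.
    have [Ua Ca] : (U `&` C) a0 by rewrite -e1.
    have [_ hD] := PD a0 Pa.
    have [z [[Wz Uz] [Pz za]]] := hD (W `&` U) (openI (qball_open y e) oU) (conj Wa Ua).
    have nCz : ~ C z.
      by move=> Cz; have : [set a0] z by rewrite e1.
    exists (W `&` U `&` ~` C); split.
      by apply: openI; [exact: openI (qball_open y e) oU | rewrite openC].
    split; first by move=> w [[]].
    split; first by exists z.
    move=> a ga' _ [_ nC]; have aa0 : a = a0 by apply: ginj; rewrite ga ga'.
    by apply: nC; rewrite aa0.
  - exists W; split; first exact: qball_open.
    split => //; split; first by exists y.
    by move=> a ga Pa Wa; apply: nex; exists a.
have [e1 e10 sub1] := ball_sub V z oV Vz.
pose e' := Num.min (e1 / 2) (Num.min e (lv n)).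
have : e' <= e' := lexx e'.
rewrite {2}/e' !le_min => /andP [h1 /andP [h2 h3]].
have h4 : 0 < e1 / 2 by lra.
have e'0 : 0 < e' by rewrite /e' !lt_min h4 e0 lv_gt0.
clearbody e'.
exists z, e'; split => //; split.
- move=> w hw; apply: VW; apply: sub1; move: hw; rewrite /qball /=; lra.
- move=> a ga Pa hw; apply: (Hex a ga Pa); apply: sub1; move: hw; rewrite /qball /=; lra.
Qed.


Lemma baire : P = set0.
Proof.
apply: contrapT => Pn.
have [y0 Py0] : exists y, P y.
  apply: contrapT => h; apply: Pn; apply/seteqP; split => // w Pw; apply: h; by exists w.
have hst : forall p : nat * T * R, exists q : T * R,
    P p.1.2 -> 0 < p.2 -> spec p.1.1 p.1.2 p.2 q.1 q.2.
  move=> [[n y] e] /=.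
  case: (pselect (P y)) => Py; last by exists (y, e) => /Py.
  have [e0|e0] := boolP (0 < e); last by exists (y, e).
  by have [z [e' h]] := step n y e Py e0; exists (z, e').
have [st hst'] := choice hst.
pose s := fix s (n : nat) : T * R := if n is k.+1 then st (k, (s k).1, (s k).2) else (y0, 1).
have inv : forall n, P (s n).1 /\ 0 < (s n).2.
  elim => [|n [IH1 IH2]]; first by split => //; exact: ltr01.
  by have [Pz e0 _ _ _] := hst' (n, (s n).1, (s n).2) IH1 IH2.
have hS : forall n, spec n (s n).1 (s n).2 (s n.+1).1 (s n.+1).2.
  by move=> n; exact: (hst' (n, (s n).1, (s n).2) (inv n).1 (inv n).2).
have nest : forall n k, qball d (s (n + k)%N).1 (s (n + k)%N).2 `<=` qball d (s n).1 (s n).2.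
  move=> n; elim => [|k IH]; first by rewrite addn0.
  rewrite addnS => w hw; apply: IH.
  have [_ _ _ _ [sub _]] := hS (n + k)%N; apply: sub.
  have := (inv (n + k)%N.+1).2; move: hw; rewrite /qball /=; lra.
have eem : forall n k, (s (n + k)%N).2 <= (s n).2.
  move=> n; elim => [|k IH]; first by rewrite addn0.
  rewrite addnS; have [_ _ h _ _] := hS (n + k)%N; exact: le_trans h IH.
have dmono : forall n m, leq n m -> d (s n).1 (s m).1 < (s n).2.
  move=> n m nm; rewrite -(subnKC nm); apply: (nest n (m - n)%N).
  by rewrite /qball /= d_refl; exact: (inv _).2.
have eemono : forall n m, leq n m -> (s m).2 <= (s n).2.
  by move=> n m nm; rewrite -(subnKC nm); apply: eem.
have cauchy : qm_cauchy d (fun n => (s n).1).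
  move=> e e0; have [K hK] := lv_small e e0; exists K.+1 => n m Nn nm.
  have h1 := dmono n m nm; have h2 := eemono _ _ Nn.
  have [_ _ _ h3 _] := hS K.
  lra.
have [x hx] := cpl _ cauchy.
have Px : P x.
  apply: Pcl => B; rewrite nbhsE => -[V [oV Vx] VB].
  have [r r0 sub] := ball_sub V x oV Vx.
  have [N hN] := hx r r0.
  exists (s N).1; split; first exact: (inv N).1.
  apply: VB; apply: sub; rewrite /qball /=.
  have := hN N (leqnn N); have := dhat_ge1 x (s N).1; lra.
pose n := g x.
have [_ _ _ _ [_ hn]] := hS n.
apply: (hn x erefl Px); rewrite /qball /=.
have [N hN] := hx _ (inv n.+1).2.
pose m := maxn N n.+1.
have h1 := dmono n.+1 m (leq_maxr N n.+1).
have h2 := hN m (leq_maxl N n.+1).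
have h3 := dhat_ge2 x (s m).1.
have h4 := d_tri (s n.+1).1 (s m).1 x.
lra.
Qed.

End Backward.

Lemma backward (T : topologicalType) :
  countable [set: T] -> quasi_Polish T -> T_D T -> scattered T.
Proof.
move=> /countable_injP [g ginj] [_ [d [qm [ind cpl]]]] td.
have ginj' : forall a b, g a = g b -> a = b by move=> a b e; apply: ginj; rewrite ?inE.
pose K := @CB_kernel T.
pose P := closure K.
have PD : P `<=` derived P.
  move=> y Py; split => // U oU Uy.
  have : K `&` U !=set0 by apply: Py; apply: open_nbhs_nbhs; split.
  move=> [w [Kw Uw]]; case: (pselect (w = y)) => [wy|ne].
  - subst w; have [_ h] := kernel_perfect Kw.
    have [z [Uz [Kz zy]]] := h U oU Uw.
    by exists z; split => //; split => //; exact: subset_closure.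
  - by exists w; split => //; split => //; exact: subset_closure.
have P0 := @baire T d qm ind cpl td g ginj' P (@closed_closure T K) PD.
rewrite /scattered; apply/seteqP; split => // z Kz.
have : P z by exact: subset_closure.
by rewrite P0.
Qed.

Theorem theorem65 (T : topologicalType) :
  @second_countable T ->
  (scattered T <-> (countable [set: T] /\ quasi_Polish T /\ T_D T)).
Proof.
move=> hsc; split; first exact: forward.
by move=> [c [q t]]; exact: backward.
Qed.
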